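(* Let $G$ be a nilpotent Lie group of dimension $2n$ with a left-invariant $\mathrm{SL}(n,\mathbb{R})$-structure whose underlying almost paracomplex structure is integrable (paracomplex). Then its associated one-forms satisfy \[\lambda=\frac{n-1}{n}\,(f_8-f_4).\]
   Context: An $\mathrm{SL}(n,\mathbb{R})$-structure on a $2n$-manifold is a splitting $TM=V\oplus H$ into rank-$n$ distributions, $K=\mathrm{id}_V-\mathrm{id}_H$, a neutral metric $g$ with $g(KX,KY)=-g(X,Y)$, and forms $F,\alpha,\beta$ such that locally there are coframes $e^1,\dots,e^{2n}$ with $V=\{e^{n+1}=\dots=e^{2n}=0\}$, $H=\{e^1=\dots=e^n=0\}$, $g=\sum_i(e^i\otimes e^{n+i}+e^{n+i}\otimes e^i)$, $F=\sum_ie^i\wedge e^{n+i}$, $\alpha=e^1\wedge\dots\wedge e^n$, $\beta=e^{n+1}\wedge\dots\wedge e^{2n}$; $(e_I)$ is the dual frame. It is paracomplex if $V$ and $H$ are integrable. Forms split by type $\Lambda^{p,q}$ ($p$ factors among $e^1,\dots,e^n$, $q$ among $e^{n+1},\dots,e^{2n}$). The one-form $\lambda$ is $\lambda(X)=\frac1n\sum_{i=1}^ng(\nabla_Xe_i,e_{n+i})$, $\nabla$ the Levi-Civita connection. For $\gamma\in\Lambda^{2,1}\oplus\Lambda^{1,2}$ set $\Lambda(\gamma)=-\frac1{n-1}\sum_{i=1}^n e_i\lrcorner(e_{n+i}\lrcorner\gamma)$, and define $f_4=-\frac12\Lambda\big((dF)^{1,2}\big)\in\Lambda^{0,1}$ and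 $f_8=-\frac12\Lambda\big((dF)^{2,1}\big)\in\Lambda^{1,0}$. *)

(* Defs.v *)
(* Left-invariant geometry on a Lie group G is encoded on its
   Lie algebra g = T_e G, using the global left-invariant adapted frame
   (e_1..e_n spanning V, e_{n+1}..e_{2n} spanning H). *)
From HB Require Import structures.
From mathcomp Require Import all_boot all_order all_algebra.
From mathcomp Require Import reals.
Set Implicit Arguments. Unset Strict Implicit. Unset Printing Implicit Defensive.
Import Order.TTheory GRing.Theory Num.Theory.
Local Open Scope ring_scope.

(* Index set of the adapted frame: [inl i] is e_i (i = 1..n, spanning V),
   [inr i] is e_{n+i} (spanning H). *)
Definition idx (n : nat) : finType := ('I_n + 'I_n)%type.

Definition isV {n} (a : idx n) : bool := if a is inl _ then true else false.

Section Defs.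
Variable R : realType.
Variable n : nat.

Definition strconst := idx n -> idx n -> idx n -> R.
Definition vec := idx n -> R.

Definition e (a : idx n) : vec := fun k => (k == a)%:R.

Definition bracket (c : strconst) (x y : vec) : vec :=
  fun k => \sum_(a : idx n) \sum_(b : idx n) x a * y b * c a b k.

Definition is_lie_algebra (c : strconst) : Prop :=
  (forall a b k, c a b k = - c b a k) /\
  (forall x y z : vec, forall k,
      bracket c x (bracket c y z) k + bracket c y (bracket c z x) k
      + bracket c z (bracket c x y) k = 0).

(* Nilpotent: the lower central series terminates, i.e. some iterated bracket
   [x_1,[x_2,[...,[x_m,y]...]]] of fixed length vanishes identically. *)
Definition nilpotent (c : strconst) : Prop :=
  exists m : nat, forall (xs : seq vec) (y : vec), size xs = m ->
    foldr (bracket c) y xs = (fun _ => 0).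

(* V and H are integrable (involutive): [V,V] c V and [H,H] c H. *)
Definition paracomplex (c : strconst) : Prop :=
  (forall a b k, isV a -> isV b -> ~~ isV k -> c a b k = 0) /\
  (forall a b k, ~~ isV a -> ~~ isV b -> isV k -> c a b k = 0).

(* The neutral metric g = \sum_i (e^i (x) e^{n+i} + e^{n+i} (x) e^i). *)
Definition gb (a b : idx n) : R :=
  match a, b with
  | inl i, inr j => (i == j)%:R
  | inr i, inl j => (i == j)%:R
  | _, _ => 0
  end.
Definition g (x y : vec) : R := \sum_(a : idx n) \sum_(b : idx n) x a * y b * gb a b.

(* The Levi-Civita connection on left-invariant vector fields, given by its
   coefficients: nabla_{e_a} e_b = \sum_k Gam a b k e_k.  It is characterised
   as the torsion-free connection with nabla g = 0 (for left-invariant fields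
   g(Y,Z) is constant, so X g(Y,Z) = 0). *)
Definition connection := idx n -> idx n -> idx n -> R.

Definition is_levi_civita (c : strconst) (Gam : connection) : Prop :=
  (forall a b k, Gam a b k - Gam b a k = c a b k) /\
  (forall a b d, g (Gam a b) (e d) + g (e b) (Gam a d) = 0).

Definition lambda (Gam : connection) : vec :=
  fun a => n%:R^-1 * \sum_(i < n) g (Gam a (inl i)) (e (inr i)).

(* F = \sum_i e^i /\ e^{n+i}, components F(e_a, e_b). *)
Definition Fb (a b : idx n) : R :=
  match a, b with
  | inl i, inr j => (i == j)%:R
  | inr i, inl j => - (i == j)%:R
  | _, _ => 0
  end.

(* dF on left-invariant fields (determinant convention for wedge/d):
   dF(X,Y,Z) = -F([X,Y],Z) + F([X,Z],Y) - F([Y,Z],X). Components. *)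
Definition dF (c : strconst) (a b d : idx n) : R :=
  - (\sum_k c a b k * Fb k d) + (\sum_k c a d k * Fb k b)
  - (\sum_k c b d k * Fb k a).

Definition type_part (p : nat) (gam : idx n -> idx n -> idx n -> R)
  (a b d : idx n) : R :=
  if (isV a + isV b + isV d)%N == p then gam a b d else 0.

(* Lambda(gam)(e_z) = -1/(n-1) \sum_i (e_i _| (e_{n+i} _| gam))(e_z)
                   = -1/(n-1) \sum_i gam(e_{n+i}, e_i, e_z). *)
Definition Lam (gam : idx n -> idx n -> idx n -> R) : vec :=
  fun z => - (n.-1)%:R^-1 * \sum_(i < n) gam (inr i) (inl i) z.

Definition f4 (c : strconst) : vec :=
  fun z => - 2^-1 * Lam (type_part 1 (dF c)) z.
Definition f8 (c : strconst) : vec :=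
  fun z => - 2^-1 * Lam (type_part 2 (dF c)) z.

End Defs.

(* Main.v *)
Require Import Defs.
From mathcomp Require Import all_boot all_order all_algebra.
From mathcomp Require Import reals.
From mathcomp Require Import ring lra.
Import GRing.Theory Num.Theory.
Local Open Scope ring_scope.
Lemma trace_nilp (R : fieldType) n (A : 'M[R]_n) m : A ^+ m = 0 -> \tr A = 0.
Proof.
move=> Am.
set y := map_mx (@polyC R) A.
have ym : y ^+ m = 0.
  have -> : y ^+ m = map_mx (@polyC R) (A ^+ m).
    elim: m {Am} => [|k IH]; first by rewrite !expr0 map_mx1.
    by rewrite !exprS IH -mulmxE map_mxM.
  by rewrite Am map_mx0.
set x := ('X : {poly R})%:M : 'M[{poly R}]_n.
have cxy : GRing.comm x y by rewrite /GRing.comm -!mulmxE scalar_mxC.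
have := subrXX_comm m cxy; rewrite ym subr0.
have -> : x ^+ m = ('X ^+ m)%:M.
  elim: m {Am ym} => [|k IH]; first by rewrite !expr0.
  by rewrite !exprS IH -mulmxE -scalar_mxM.
move=> /(congr1 determinant); rewrite -mulmxE det_mulmx det_scalar -exprM.
rewrite -/(char_poly_mx A) -/(char_poly A) => hd.
have : char_poly A %| ('X - 0%:P) ^+ (m * n).
  by rewrite subr0 hd dvdp_mulr.
case/dvdp_exp_XsubCP => k _; rewrite subr0 eqp_monic ?char_poly_monic ?monicXn //.
move/eqP => hk.
have kn : k = n.
  have := size_char_poly A; rewrite hk size_polyXn; by case.
case: n A y x cxy hd hk kn {ym Am} => [|n'] A y x cxy hd hk kn.
  by rewrite /mxtrace big_ord0.
have := char_poly_trace A (ltn0Sn n'); rewrite hk kn coefXn /=.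
rewrite eqn_leq ltnn /=. move=> h; apply/eqP; by rewrite -oppr_eq0 -h andbF.
Qed.

Section Aux.
Variable R : realType.
Variable n : nat.

Lemma sum_delta (T : finType) (F : T -> R) (d : T) :
  \sum_(a : T) F a * (a == d)%:R = F d.
Proof.
rewrite (bigD1 d) //= eqxx mulr1 big1 ?addr0 // => a /negPf ->; by rewrite mulr0.
Qed.

Definition sw (a : idx n) : idx n :=
  match a with inl i => inr i | inr i => inl i end.
Definition sgn (a : idx n) : R := if a is inl _ then -1 else 1.

Lemma gbE (a b : idx n) : gb R a b = (a == sw b)%:R.
Proof. by case: a b => i [] j. Qed.

Lemma gbC (a b : idx n) : gb R a b = gb R b a.
Proof. by case: a b => i [] j //=; rewrite eq_sym. Qed.

Lemma FbE (a b : idx n) : Fb R a b = sgn b * (a == sw b)%:R.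
Proof. by case: a b => i [] j /=; rewrite ?mul1r ?mulN1r ?mulr0 ?oppr0. Qed.

Lemma gbsum (x : vec R n) d : \sum_k x k * gb R k d = x (sw d).
Proof. by under eq_bigr do rewrite gbE; rewrite sum_delta. Qed.

Lemma Fbsum (x : vec R n) d : \sum_k x k * Fb R k d = sgn d * x (sw d).
Proof.
under eq_bigr do rewrite FbE mulrCA.
by rewrite -mulr_sumr sum_delta.
Qed.

Lemma g_e (x : vec R n) d : g x (e R d) = x (sw d).
Proof.
rewrite /g -(gbsum x d); apply: eq_bigr => a _.
rewrite -(@sum_delta _ (fun b => x a * gb R a b) d); apply: eq_bigr => b _.
by rewrite /e mulrAC.
Qed.

Lemma gC (x y : vec R n) : g x y = g y x.
Proof.
rewrite /g exchange_big; apply: eq_bigr => a _; apply: eq_bigr => b _.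
by rewrite gbC; ring.
Qed.

Lemma bracket_e (c : strconst R n) z (w : vec R n) k :
  bracket c (e R z) w k = \sum_b w b * c z b k.
Proof.
rewrite /bracket.
under eq_bigr do (under eq_bigr do rewrite -mulrA; rewrite -mulr_sumr /e mulrC).
by rewrite (@sum_delta _ (fun a => \sum_b w b * c a b k)).
Qed.

Lemma block_trace (c : strconst R n) z (p q : 'I_n -> idx n) :
  (forall f : idx n -> R, \sum_a f a = \sum_i f (p i) + \sum_i f (q i)) ->
  (forall k b, (p k == p b) = (k == b)) ->
  (forall b k, c z (q b) (p k) = 0) ->
  nilpotent c ->
  \sum_i c z (p i) (p i) = 0.
Proof.
move=> hsum pinj hq [m hm].
pose M := \matrix_(b, k) c z (p b) (p k).
pose rv (y : vec R n) := \row_k y (p k).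
have step w : rv (bracket c (e R z) w) = rv w *m M.
  apply/rowP => k; rewrite !mxE bracket_e hsum.
  rewrite [X in _ + X]big1 ?addr0 => [|i _]; last by rewrite hq mulr0.
  by apply: eq_bigr => i _; rewrite !mxE.
have claim j y : rv (foldr (bracket c) y (nseq j (e R z))) = rv y *m M ^+ j.
  elim: j => [|j IH]; first by rewrite expr0 mulmx1.
  by rewrite /= step IH exprSr mulmxA.
have Mm : M ^+ m = 0.
  apply/matrixP => b k.
  have -> : (M ^+ m) b k = (rv (e R (p b)) *m M ^+ m) 0 k.
    have -> : rv (e R (p b)) = delta_mx ord0 b.
      apply/rowP => j; by rewrite !mxE /e pinj.
    by rewrite -rowE mxE.
  by rewrite -claim hm ?size_nseq // !mxE.
transitivity (\tr M); last exact: (@trace_nilp _ _ _ _ Mm).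
by rewrite /mxtrace; apply: eq_bigr => i _; rewrite mxE.
Qed.

End Aux.
Arguments sw {n}.
Arguments sgn {R n}.

Theorem lemma8p1 (R : realType) (n : nat) (c : strconst R n)
  (Gam : connection R n) :
  (1 < n)%N ->
  is_lie_algebra c -> nilpotent c -> paracomplex c ->
  is_levi_civita c Gam ->
  forall z : idx n,
    lambda Gam z = (n.-1)%:R / n%:R * (f8 c z - f4 c z).
Proof.
move=> n1 [anti _] nil [pc1 pc2] [tor met] z.
have kosz a b d : Gam a b (sw d) =
    2^-1 * (c a b (sw d) - c b d (sw a) + c d a (sw b)).
  have m1 := met a b d; have m2 := met b a d; have m3 := met d b a.
  rewrite g_e gC g_e in m1; rewrite g_e gC g_e in m2; rewrite g_e gC g_e in m3.
  have t1 := tor a b (sw d); have t2 := tor b d (sw a); have t3 := tor d a (sw b).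
  lra.
have dFv i : dF c (inr i) (inl i) z = - (sgn z * c (inr i) (inl i) (sw z))
    - c (inr i) z (inr i) - c (inl i) z (inl i).
  rewrite /dF !Fbsum /=; ring.
rewrite /lambda.
under eq_bigr => i _ do rewrite g_e (kosz z (inl i) (inr i)).
rewrite /f4 /f8 /Lam /type_part.
have nz : (n%:R : R) != 0 by rewrite pnatr_eq0 -lt0n ltnW.
have nz1 : (n.-1%:R : R) != 0 by rewrite pnatr_eq0 -lt0n -ltnS prednK // ltnW.
have sum_idx (f : idx n -> R) : \sum_a f a = \sum_i f (inl i) + \sum_i f (inr i).
  exact: big_sumType.
case: z dFv => j dFv /=; rewrite big1_eq mulr0 mulr0 ?subr0 ?sub0r.
- set SA := \sum_(i < n) c (inl j) (inl i) (inl i).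
  set SB := \sum_(i < n) c (inl i) (inr i) (inr j).
  set SC := \sum_(i < n) c (inr i) (inl j) (inr i).
  have e1 : \sum_(i < n) 2^-1 * (c (inl j) (inl i) (inl i) - c (inl i) (inr i) (inr j) +
      c (inr i) (inl j) (inr i)) = 2^-1 * (SA - SB + SC).
    by rewrite -mulr_sumr big_split sumrB.
  have e2 : \sum_(i < n) dF c (inr i) (inl i) (inl j) = SA - SB - SC.
    rewrite -sumrB -sumrB; apply: eq_bigr => i _.
    rewrite dFv /= (anti (inr i) (inl i)) (anti (inl i) (inl j)); ring.
  have e3 : SC = 0.
    rewrite /SC; under eq_bigr => i _ do rewrite anti.
    rewrite sumrN (@block_trace R n c (inl j) inr inl) ?oppr0 //.
    + by move=> f; rewrite sum_idx addrC.
    + by move=> b k; apply: pc1.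
  rewrite e1 e2 e3; field; exact/andP.
- set SA := \sum_(i < n) c (inr j) (inl i) (inl i).
  set SB := \sum_(i < n) c (inl i) (inr i) (inl j).
  set SC := \sum_(i < n) c (inr i) (inr j) (inr i).
  have e1 : \sum_(i < n) 2^-1 * (c (inr j) (inl i) (inl i) - c (inl i) (inr i) (inl j) +
      c (inr i) (inr j) (inr i)) = 2^-1 * (SA - SB + SC).
    by rewrite -mulr_sumr big_split sumrB.
  have e2 : \sum_(i < n) dF c (inr i) (inl i) (inr j) = SA + SB - SC.
    rewrite -big_split -sumrB; apply: eq_bigr => i _.
    rewrite dFv /= (anti (inr i) (inl i)) (anti (inl i) (inr j)); ring.
  have e3 : SA = 0.
    rewrite /SA (@block_trace R n c (inr j) inl inr) //.
    + by move=> b k; apply: pc2.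
  rewrite e1 e2 e3; field; exact/andP.

Qed.
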